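(* Let $k\geq 1$ be a fixed integer. Then almost surely $$\kappa_3\!\left(G\!\left(n,\tfrac{1}{2}\cdot\frac{\log n+(k+1)\log\log n-\log\log\log n}{n}\right)\right)\leq k-1.$$
   Context: $\log$ is the natural logarithm; $G(n,p)$ is the binomial random graph on $n$ vertices, $n\to\infty$, and ''almost surely'' means with probability tending to $1$. For $S\subseteq V(G)$, trees $T_1,\dots,T_k$ are internally disjoint trees connecting $S$ if $S\subseteq V(T_i)$, $E(T_i)\cap E(T_j)=\emptyset$ and $V(T_i)\cap V(T_j)=S$ for $i\neq j$; $\kappa(S)$ is the maximum number of such trees and $\kappa_3(G)=\min\{\kappa(S):|S|=3\}$, with $\kappa_3(G)=0$ if $G$ is disconnected. *)

(* Defs.v *)
From HB Require Import structures.
From mathcomp Require Import all_boot all_order all_algebra.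
From mathcomp Require Import all_classical all_reals all_analysis.
Set Implicit Arguments. Unset Strict Implicit. Unset Printing Implicit Defensive.
Import Order.TTheory GRing.Theory Num.Theory.

(* A graph on vertex set 'I_n is given by its edge set E : {set {set 'I_n}};
   edges are 2-element subsets of 'I_n. *)
Definition pairs (n : nat) : {set {set 'I_n}} := [set e : {set 'I_n} | #|e| == 2].

Definition adj (n : nat) (E : {set {set 'I_n}}) : rel 'I_n :=
  fun x y => (x != y) && ([set x; y] \in E).

Definition connectedb (n : nat) (E : {set {set 'I_n}}) : bool :=
  [forall u, forall v, connect (adj E) u v].

Definition acyclic (n : nat) (ET : {set {set 'I_n}}) : Prop :=
  ~ exists s : seq 'I_n, [&& uniq s, 2 < size s & cycle (adj ET) s].

Definition is_tree_in (n : nat) (E : {set {set 'I_n}})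
    (VT : {set 'I_n}) (ET : {set {set 'I_n}}) : Prop :=
  [/\ ET \subset E,
      (forall e, e \in ET -> (#|e| == 2) && (e \subset VT)),
      (0 < #|VT|)%N,
      (forall u v, u \in VT -> v \in VT -> connect (adj ET) u v)
    & acyclic ET].

Definition has_idtrees (n : nat) (E : {set {set 'I_n}}) (S : {set 'I_n})
    (m : nat) : Prop :=
  exists T : 'I_m -> {set 'I_n} * {set {set 'I_n}},
    (forall i, is_tree_in E (T i).1 (T i).2 /\ S \subset (T i).1) /\
    (forall i j, i != j ->
        [disjoint (T i).2 & (T j).2] /\ (T i).1 :&: (T j).1 = S).

(* kappa(S): maximum number of internally disjoint trees connecting S.
   For |S| = 3 each such tree has >= 2 edges and they are edge-disjoint,
   so the maximum is attained below 'C(n,2).+1. *)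
Definition kappaS (n : nat) (E : {set {set 'I_n}}) (S : {set 'I_n}) : nat :=
  \max_(m < 'C(n, 2).+1 | `[< has_idtrees E S m >]) m.

Definition kappa3 (n : nat) (E : {set {set 'I_n}}) : nat :=
  if connectedb E then \big[minn/'C(n, 2)]_(S : {set 'I_n} | #|S| == 3) kappaS E S
  else 0.

Definition Gnp_prob (R : realType) (n : nat) (p : R)
    (P : pred {set {set 'I_n}}) : R :=
  (\sum_(E : {set {set 'I_n}} | (E \subset pairs n) && P E)
     p ^+ #|E| * (1 - p) ^+ ('C(n, 2) - #|E|))%R.

Definition p_thm4 (R : realType) (k n : nat) : R :=
  (2^-1 * ((ln (n%:R : R) + (k.+1)%:R * ln (ln (n%:R : R))
            - ln (ln (ln (n%:R : R)))) / n%:R))%R.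

(* Main.v *)
Require Import Defs.
From HB Require Import structures.
From mathcomp Require Import all_boot all_order all_algebra.
From mathcomp Require Import all_classical all_reals all_analysis.
From mathcomp Require Import ring lra zify.
Import Order.TTheory GRing.Theory Num.Theory numFieldNormedType.Exports.
Local Open Scope ring_scope.



Lemma sum_subsets {R : realType} {T : finType} (V : {set T}) (f : nat -> R) :
  \sum_(E : {set T} | E \subset V) f #|E| = \sum_(i < #|V|.+1) f i *+ 'C(#|V|, i).
Proof.
rewrite (partition_big (fun E : {set T} => (inord #|E| : 'I_#|V|.+1)) predT) //=.
apply: eq_bigr => i _.
rewrite -cards_draws -sumr_const.
apply: eq_big => E.
  rewrite !inE; case: (boolP (E \subset V)) => //= sEV.
  have hE : (#|E| < #|V|.+1)%N by rewrite ltnS subset_leq_card.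
  apply/idP/idP => /eqP H.
  - by rewrite -H inordK.
  - by apply/eqP; apply: val_inj; rewrite /= inordK // H.
move=> /andP[sEV /eqP <-].
have hE : (#|E| < #|V|.+1)%N by rewrite ltnS subset_leq_card.
by rewrite inordK.
Qed.

Lemma binom_sum {R : realType} {T : finType} (V : {set T}) (p : R) :
  \sum_(E : {set T} | E \subset V) p ^+ #|E| * (1 - p) ^+ (#|V| - #|E|) = 1.
Proof.
rewrite (sum_subsets V (fun m => p ^+ m * (1 - p) ^+ (#|V| - m))).
have h := exprDn (1 - p) p #|V|; rewrite subrK expr1n in h; rewrite [RHS]h.
by apply: eq_bigr => i _; rewrite mulrC.
Qed.

Lemma avoid_sum {R : realType} {T : finType} (U D : {set T}) (p : R) :
  D \subset U ->
  \sum_(E : {set T} | (E \subset U) && [disjoint E & D])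
     p ^+ #|E| * (1 - p) ^+ (#|U| - #|E|) = (1 - p) ^+ #|D|.
Proof.
move=> sDU.
have cUD : #|U :\: D| = (#|U| - #|D|)%N by rewrite cardsD (finset.setIidPr sDU).
have lDU : (#|D| <= #|U|)%N by apply: subset_leq_card.
under eq_bigl => E do rewrite -subsetD.
have hb := binom_sum (U :\: D) p.
transitivity ((\sum_(E : {set T} | E \subset U :\: D) p ^+ #|E| * (1 - p) ^+ (#|U :\: D| - #|E|)) * (1-p) ^+ #|D|); last by rewrite hb mul1r.
rewrite mulr_suml.
apply: eq_bigr => E sE.
have := subset_leq_card sE; rewrite cUD => hE.
rewrite -mulrA -exprD; congr (_ * _ ^+ _); lia.
Qed.



Definition Dv {n : nat} (i : 'I_n) : {set {set 'I_n}} := [set e in pairs n | i \in e].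

Lemma card_pairs n : #|pairs n| = 'C(n, 2).
Proof. by rewrite /pairs card_draws card_ord. Qed.

Lemma Dv_sub n (i : 'I_n) : Dv i \subset pairs n.
Proof. by apply/fintype.subsetP => e; rewrite inE => /andP[]. Qed.

Lemma card_Dv n (i : 'I_n) : (#|Dv i| <= n.-1)%N.
Proof.
have sub : Dv i \subset [set [set i; j] | j in [set~ i]].
  apply/fintype.subsetP => e; rewrite !inE => /andP[/cards2P [x [y [xy ->]]] ie].
  move: ie; rewrite !inE => /orP[]/eqP->.
    by apply/imsetP; exists y; rewrite // !inE eq_sym.
  by apply/imsetP; exists x; rewrite ?inE // finset.setUC.
apply: (leq_trans (subset_leq_card sub)); apply: (leq_trans (leq_imset_card _ _)).
by rewrite cardsC1 card_ord.
Qed.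

Lemma card_DvI n (i j : 'I_n) : i != j -> (#|Dv i :&: Dv j| <= 1)%N.
Proof.
move=> ij.
have sub : Dv i :&: Dv j \subset [set [set i; j]].
  apply/fintype.subsetP => e; rewrite !inE => /andP[/andP[e2 ie] /andP[_ je]].
  rewrite eq_sym eqEcard; apply/andP; split.
    by apply/fintype.subsetP => x; rewrite !inE => /orP[]/eqP->.
  by rewrite (eqP e2) cards2 ij.
by rewrite -(cards1 [set i; j]) subset_leq_card.
Qed.

Lemma disjUr (T : finType) (E A B : {set T}) :
  [disjoint E & A :|: B] = [disjoint E & A] && [disjoint E & B].
Proof. by rewrite !finset.disjoints_subset finset.setCU finset.subsetI. Qed.

Lemma iso_disconn n (E : {set {set 'I_n}}) (i : 'I_n) :
  (1 < n)%N -> [disjoint E & Dv i] -> ~~ connectedb E.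
Proof.
move=> n1 dis.
have : (0 < #|[set~ i]|)%N by rewrite cardsC1 card_ord; lia.
move/card_gt0P => [j]; rewrite !inE => ji.
apply/negP => /forallP /(_ i) /forallP /(_ j) /connectP [s pth lst].
case: s pth lst => [/= _ jie | y s /= /andP[aiy _] _].
  by move: ji; rewrite jie eqxx.
move: aiy; rewrite /adj => /andP[iy ine].
have hD : [set i; y] \in Dv i by rewrite !inE cards2 iy eqxx.
by rewrite (disjointFr dis ine) in hD.
Qed.



Lemma sum_ind {R : realType} {T : finType} (P b : pred T) (F : T -> R) :
  \sum_(E | P E) F E * (b E)%:R = \sum_(E | P E && b E) F E.
Proof.
rewrite big_mkcondr /=; apply: eq_bigr => E _; case: (b E); by rewrite ?mulr1 ?mulr0.
Qed.

Lemma comb_bound (R : realType) (n k : nat) (p : R) :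
  (1 < n)%N -> 0 <= p -> p <= 2^-1 ->
  1 - @Gnp_prob R n p (fun E => (kappa3 E <= k.-1)%N)
     <= (n%:R * (1 - p) ^+ n.-1)^-1 + 2 * p /\
  @Gnp_prob R n p (fun E => (kappa3 E <= k.-1)%N) <= 1.
Proof.
move=> n1 p0 p12.
set a := 1 - p.
have a0 : 0 < a by rewrite /a; lra.
have a1 : a <= 1 by rewrite /a; lra.
set P := (fun E : {set {set 'I_n}} => (kappa3 E <= k.-1)%N).
set w := fun E : {set {set 'I_n}} => p ^+ #|E| * a ^+ (#|pairs n| - #|E|).
have hG : @Gnp_prob R n p P = \sum_(E : {set {set 'I_n}} | E \subset pairs n) w E * (P E)%:R.
  by rewrite sum_ind /Gnp_prob /w card_pairs.
have htot : \sum_(E : {set {set 'I_n}} | E \subset pairs n) w E = 1 by apply: binom_sum.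
have hw0 : forall E, 0 <= w E.
  by move=> E; rewrite /w mulr_ge0 // exprn_ge0 // ltW.
set iso := fun (E : {set {set 'I_n}}) (i : 'I_n) => [disjoint E & Dv i].
have hE1 : forall i, \sum_(E : {set {set 'I_n}} | E \subset pairs n) w E * (iso E i)%:R = a ^+ #|Dv i|.
  by move=> i; rewrite sum_ind avoid_sum // Dv_sub.
have hE2 : forall i j, \sum_(E : {set {set 'I_n}} | E \subset pairs n) w E * ((iso E i)%:R * (iso E j)%:R)
     = a ^+ #|Dv i :|: Dv j|.
  move=> i j; rewrite -(avoid_sum (pairs n) _ p); last by rewrite finset.subUset !Dv_sub.
  rewrite -sum_ind; apply: eq_bigr => E _; rewrite disjUr /iso.
  by case: [disjoint E & Dv i]; case: [disjoint E & Dv j]; rewrite /= ?mulr1 ?mulr0.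
set X := fun E => \sum_(i : 'I_n) ((iso E i)%:R : R).
set mu := \sum_(i : 'I_n) a ^+ #|Dv i|.
have hEX : \sum_(E : {set {set 'I_n}} | E \subset pairs n) w E * X E = mu.
  under eq_bigr => E _ do rewrite /X mulr_sumr.
  by rewrite exchange_big /=; apply: eq_bigr => i _; rewrite hE1.
have hEX2 : \sum_(E : {set {set 'I_n}} | E \subset pairs n) w E * X E ^+ 2
    = \sum_(i : 'I_n) \sum_(j : 'I_n) a ^+ #|Dv i :|: Dv j|.
  under eq_bigr => E _ do rewrite expr2 /X mulr_suml mulr_sumr.
  rewrite exchange_big /=; apply: eq_bigr => i _.
  under eq_bigr => E _ do rewrite mulr_sumr mulr_sumr.
  by rewrite exchange_big /=; apply: eq_bigr => j _; rewrite -hE2.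
have hmu_lb : n%:R * a ^+ n.-1 <= mu.
  have : \sum_(i : 'I_n) a ^+ n.-1 <= mu.
    by apply: ler_sum => i _; apply: ler_wiXn2l => //; [exact: ltW | exact: card_Dv].
  by rewrite sumr_const (card_ord n) mulr_natl.
have nlb0 : 0 < n%:R * a ^+ n.-1.
  by rewrite mulr_gt0 ?exprn_gt0 // ltr0n; lia.
have mu0 : 0 < mu by apply: lt_le_trans hmu_lb.
have hcheb : 1 - @Gnp_prob R n p P <=
    \sum_(E : {set {set 'I_n}} | E \subset pairs n) w E * ((X E - mu) ^+ 2 / mu ^+ 2).
  rewrite hG -[X in X - _]htot -sumrB; apply: ler_sum => E _.
  rewrite -{1}[w E]mulr1 -mulrBr; apply: ler_wpM2l => //.
  case HP : (P E); first by rewrite subrr divr_ge0 // ?sqr_ge0 // exprn_ge0 // ltW.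
  have hi : forall i, ~~ iso E i.
    move=> i; apply/negP => hi; have hd := @iso_disconn n E i n1 hi.
    by move: HP; rewrite /P /kappa3 (negbTE hd).
  have -> : X E = 0 by rewrite /X big1 // => i _; rewrite (negbTE (hi i)).
  by rewrite sub0r sqrrN divff ?subr0 // expf_neq0 // gt_eqF.
have hexp : \sum_(E : {set {set 'I_n}} | E \subset pairs n) w E * ((X E - mu) ^+ 2 / mu ^+ 2)
   = (\sum_(E : {set {set 'I_n}} | E \subset pairs n) w E * X E ^+ 2 - 2 * mu * mu + mu ^+ 2 * 1) / mu ^+ 2.
  under eq_bigr => E _ do rewrite mulrA.
  rewrite -mulr_suml; congr (_ / _).
  transitivity (\sum_(E : {set {set 'I_n}} | E \subset pairs n)
     (w E * X E ^+ 2 - (2 * mu) * (w E * X E) + mu ^+ 2 * w E)).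
    by apply: eq_bigr => E _; ring.
  by rewrite big_split sumrB /= -!mulr_sumr hEX htot.
have hpair : forall i j : 'I_n, a ^+ #|Dv i :|: Dv j| <=
    (if j == i then a ^+ #|Dv i| else 0) + a ^+ #|Dv i| * a ^+ #|Dv j| / a.
  move=> i j; case: eqVneq => [->|ij].
    by rewrite finset.setUid lerDl divr_ge0 ?mulr_ge0 ?exprn_ge0 // ltW.
  rewrite add0r ler_pdivlMr // -exprSr -exprD; apply: ler_wiXn2l => //; first exact: ltW.
  have hij : i != j by apply/eqP => E; move: ij; rewrite E eqxx.
  have := cardsUI (Dv i) (Dv j); have := @card_DvI n i j hij.
  lia.
have hEX2b : \sum_(E : {set {set 'I_n}} | E \subset pairs n) w E * X E ^+ 2 <= mu + mu ^+ 2 / a.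
  rewrite hEX2; apply: le_trans.
    apply: ler_sum => i _; apply: ler_sum => j _; exact: hpair i j.
  rewrite le_eqVlt; apply/orP; left; apply/eqP.
  under eq_bigr => i _ do rewrite big_split /= -big_mkcond big_pred1_eq.
  rewrite big_split /=; congr (_ + _).
  rewrite /mu expr2 !mulr_suml; apply: eq_bigr => i _.
  by rewrite mulr_sumr mulr_suml.
have mun : mu != 0 by rewrite gt_eqF.
have an : a != 0 by rewrite gt_eqF.
split.
  apply: (le_trans hcheb); rewrite hexp.
  apply: (le_trans (y := (mu + mu ^+ 2 / a - 2 * mu * mu + mu ^+ 2 * 1) / mu ^+ 2)).
    apply: ler_wpM2r; first by rewrite invr_ge0 exprn_ge0 // ltW.
    by rewrite !lerD2r.
  have -> : (mu + mu ^+ 2 / a - 2 * mu * mu + mu ^+ 2 * 1) / mu ^+ 2 = mu^-1 + (a^-1 - 1).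
    by clearbody a mu; field; rewrite an mun.
  have h1 : mu^-1 <= (n%:R * a ^+ n.-1)^-1 by rewrite lef_pV2 // posrE.
  have h2 : a^-1 <= 1 + 2 * p.
    by rewrite -[a^-1]mul1r ler_pdivrMr // /a; nra.
  lra.
rewrite hG -[X in _ <= X]htot; apply: ler_sum => E _.
by case: (P E); rewrite ?mulr1 ?mulr0.
Qed.



Lemma lnle {R : realType} (x : R) : 0 < x -> ln x <= x - 1.
Proof.
move=> x0; have h := @le_ln1Dx R (x - 1).
rewrite addrCA subrr addr0 in h; apply: h; lra.
Qed.

Lemma ln_tang {R : realType} (y c : R) : 0 < y -> 0 < c -> ln y <= ln c + y / c - 1.
Proof.
move=> y0 c0; have h := @lnle R (y / c) (divr_gt0 y0 c0).
rewrite ln_div ?posrE // in h; lra.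
Qed.

Lemma ln_sq {R : realType} (x : R) : 1 <= x -> ln x ^+ 2 <= 4 * x.
Proof.
move=> x1; set s := Num.sqrt x.
have x0 : 0 <= x by lra.
have ss : s * s = x by rewrite -expr2 sqr_sqrtr.
have s1 : 1 <= s by rewrite -sqrtr1 ler_wsqrtr.
have s0 : 0 < s by lra.
have hl : ln x = ln s + ln s by rewrite -ss lnM ?posrE.
have h1 := @lnle R s s0.
have h2 : 0 <= ln s by apply: ln_ge0.
rewrite hl -ss; nra.
Qed.

Lemma asym_core {R : realType} (k n : nat) (e : R) :
  0 < e ->
  let K : R := (k.+1)%:R in
  let C1 : R := `|K * (ln (4 * K) - 1)| in
  2 <= (n%:R : R) -> 13 + 2 * C1 ^+ 2 <= (n%:R : R) -> 4 * (13 + 2 * C1 ^+ 2) / e ^+ 2 < (n%:R : R) ->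
  expR 1 <= ln (n%:R : R) -> 8 / 3 * (2 / e + C1 + 8 + 2 * C1 ^+ 2) <= ln (n%:R : R) ->
  0 <= p_thm4 R k n /\ p_thm4 R k n <= 2^-1 /\
  ((n%:R : R) * (1 - p_thm4 R k n) ^+ n.-1)^-1 + 2 * p_thm4 R k n < e.
Proof.
move=> e0 K C1 hx2 hxC hxe hL1 hLT.
set x : R := n%:R in hx2 hxC hxe hL1 hLT *.
set L := ln x in hL1 hLT *.
set L2 := ln L; set L3 := ln L2.
have x0 : 0 < x by lra.
have e1 : 2 <= expR (1 : R) by have := @expR_ge1Dx R 1; lra.
have L0 : 0 < L by lra.
have L2ge1 : 1 <= L2.
  have : ln (expR 1) <= ln L by rewrite ler_ln ?posrE ?expR_gt0.
  by rewrite expRK.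
have L3ge0 : 0 <= L3 by apply: ln_ge0.
have L3le : L3 <= L2 - 1 by apply: lnle; lra.
have K1 : 1 <= K by rewrite /K ler1n.
have K0 : 0 < K by lra.
have tang := @ln_tang R L (4 * K) L0 (ltac:(lra)).
have hKL2 : K * L2 <= K * (ln (4 * K) - 1) + L / 4.
  have := ler_wpM2l (ltW K0) tang.
  have -> : K * (ln (4 * K) + L / (4 * K) - 1) = K * (ln (4 * K) - 1) + L / 4.
    by field; rewrite gt_eqF.
  done.
have hC1 : K * (ln (4 * K) - 1) <= C1 by apply: ler_norm.
have C10 : 0 <= C1 by apply: normr_ge0.
have hL2K : L2 <= K * L2 by nra.
set Y := L + K * L2 - L3.
have hY0 : 0 <= Y by rewrite /Y; lra.
have hYup : Y <= 5 / 4 * L + C1 by rewrite /Y; lra.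
have hLsq : L ^+ 2 <= 4 * x by apply: ln_sq; lra.
have hY2 : Y ^+ 2 <= 13 * x + 2 * C1 ^+ 2.
  have h1 : Y ^+ 2 <= (5 / 4 * L + C1) ^+ 2 by apply: lerXn2r; rewrite ?nnegrE //; lra.
  nra.
have hp : p_thm4 R k n = Y / (2 * x).
  rewrite /p_thm4 /Y -/x -/L -/L2 -/L3 /K; field; by rewrite gt_eqF.
set p := p_thm4 R k n in hp *.
have hpx : p * (2 * x) = Y by rewrite hp; field; rewrite gt_eqF.
have p0 : 0 <= p by rewrite hp divr_ge0 //; lra.
have hp2 : 4 * x ^+ 2 * p ^+ 2 <= 13 * x + 2 * C1 ^+ 2.
  by have -> : 4 * x ^+ 2 * p ^+ 2 = Y ^+ 2 by rewrite -hpx; ring.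
have x1 : 1 <= x by lra.
have hxp2 : 4 * (x * p ^+ 2) <= 13 + 2 * C1 ^+ 2.
  have : x * (4 * (x * p ^+ 2)) <= x * (13 + 2 * C1 ^+ 2) by nra.
  by rewrite ler_pM2l.
have p12 : p <= 2^-1.
  have hC2 : 0 <= C1 ^+ 2 by apply: sqr_ge0.
  have hxx : 13 * x + 2 * C1 ^+ 2 <= x ^+ 2.
    have h1 := ler_wpM2l (ltW x0) hxC.
    have h2 : C1 ^+ 2 <= x * C1 ^+ 2 by rewrite ler_peMl.
    rewrite expr2; lra.
  have : x ^+ 2 * (4 * p ^+ 2) <= x ^+ 2 * 1 by nra.
  rewrite ler_pM2l ?exprn_gt0 // => h4.
  nra.
have hpe : 4 * p < e.
  have hxe2 : 4 * (13 + 2 * C1 ^+ 2) < x * e ^+ 2.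
    by move: hxe; rewrite ltr_pdivrMr ?exprn_gt0.
  have hC2 : 0 <= C1 ^+ 2 by apply: sqr_ge0.
  have h2 : C1 ^+ 2 <= x * C1 ^+ 2 by rewrite ler_peMl.
  have h3 : x * (4 * (13 + 2 * C1 ^+ 2)) < x * (x * e ^+ 2) by rewrite ltr_pM2l.
  have : x ^+ 2 * ((4 * p) ^+ 2) < x ^+ 2 * e ^+ 2.
    have -> : x ^+ 2 * ((4 * p) ^+ 2) = 4 * (4 * x ^+ 2 * p ^+ 2) by ring.
    have -> : x ^+ 2 * e ^+ 2 = x * (x * e ^+ 2) by ring.
    lra.
  rewrite ltr_pM2l ?exprn_gt0 //.
  move=> h; nra.
set a := 1 - p.
have a12 : 2^-1 <= a by rewrite /a; lra.
have a0 : 0 < a by lra.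
have hpa : p / a <= p + 2 * p ^+ 2.
  rewrite ler_pdivrMr // /a; nra.
have ha : expR (- (p / a)) <= a.
  have h1 : a^-1 <= expR (p / a).
    have h := @expR_ge1Dx R (p / a).
    have e2 : 1 + p / a = a^-1 by rewrite /a; field; rewrite gt_eqF.
    by rewrite e2 in h.
  by rewrite expRN -[X in _ <= X]invrK lef_pV2 ?posrE ?expR_gt0 ?invr_gt0.
have hpow : expR (- (x * (p / a))) <= a ^+ n.
  rewrite -mulrN /x expRM_natl; apply: lerXn2r; rewrite ?nnegrE ?expR_ge0 //; lra.
have hmu : expR (L - x * (p / a)) <= x * a ^+ n.-1.
  rewrite expRD /L lnK ?posrE //.
  apply: (le_trans (ler_wpM2l (ltW x0) hpow)); apply: ler_wpM2l; first lra.
  by apply: ler_wiXn2l; rewrite ?leq_pred // /a; lra.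
set Z := 3 / 8 * L - C1 / 2 - 7 - C1 ^+ 2.
have hZ : Z <= L - x * (p / a).
  have h1 : x * (p / a) <= x * p + 2 * (x * p ^+ 2) by nra.
  have h2 : x * p = Y / 2 by nra.
  rewrite /Z; lra.
have hZe : 2 / e <= Z.
  rewrite /Z; have : 0 <= C1 ^+ 2 by apply: sqr_ge0.
  lra.
have hexpZ : 2 / e < expR Z by have := @expR_ge1Dx R Z; lra.
have hmu2 : 2 / e < x * a ^+ n.-1.
  apply: (lt_le_trans hexpZ); apply: (le_trans _ hmu); rewrite ler_expR //.
have hinv : (x * a ^+ n.-1)^-1 < e / 2.
  rewrite -[e / 2]invf_div ltf_pV2 ?posrE //; last by apply: divr_gt0.
  apply: lt_trans hmu2; apply: divr_gt0 => //; lra.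
split => //; split => //; lra.
Qed.



Lemma main_bound (R : realType) (k : nat) : (1 <= k)%N -> forall e : R, 0 < e ->
  exists N, forall n, (N <= n)%N ->
   `|1 - @Gnp_prob R n (p_thm4 R k n) (fun E => (kappa3 E <= k.-1)%N)| < e.
Proof.
move=> k1 e e0.
set K : R := (k.+1)%:R.
set C1 : R := `|K * (ln (4 * K) - 1)|.
have C10 : 0 <= C1 by apply: normr_ge0.
have C20 : 0 <= C1 ^+ 2 by apply: sqr_ge0.
set T := 8 / 3 * (2 / e + C1 + 8 + 2 * C1 ^+ 2).
have T0 : 0 <= T.
  have : 0 <= 2 / e by rewrite divr_ge0 // ltW.
  rewrite /T; lra.
set M := expR 1 + T.
set A := expR M.
have A0 : 0 < A by apply: expR_gt0.
have Q0 : 0 <= 4 * (13 + 2 * C1 ^+ 2) / e ^+ 2 by rewrite divr_ge0 ?exprn_ge0 ?ltW //; lra.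
set B := A + (13 + 2 * C1 ^+ 2) + 4 * (13 + 2 * C1 ^+ 2) / e ^+ 2.
exists (Num.truncn B).+2 => n hn.
have hB : B < (n%:R : R).
  apply: (lt_le_trans (truncnS_gt B)); rewrite ler_nat; exact: ltnW hn.
have hx2 : 2 <= (n%:R : R) by rewrite ler_nat; lia.
have hx0 : 0 < (n%:R : R) by lra.
have hLM : M <= ln (n%:R : R).
  have : ln A <= ln (n%:R : R) by rewrite ler_ln ?posrE //; rewrite /B in hB; lra.
  by rewrite /A expRK.
have e1 : 0 <= expR (1 : R) := expR_ge0 _.
have h3 : 13 + 2 * C1 ^+ 2 <= (n%:R : R) by rewrite /B in hB; lra.
have h4 : 4 * (13 + 2 * C1 ^+ 2) / e ^+ 2 < (n%:R : R) by rewrite /B in hB; lra.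
have h5 : expR 1 <= ln (n%:R : R) by rewrite /M in hLM; lra.
have h6 : T <= ln (n%:R : R) by rewrite /M in hLM; lra.
have H := @asym_core R k n e e0.
have H1 := H hx2.
have H2 := H1 h3.
have H3 := H2 h4.
have H4 := H3 h5.
have H5 := H4 h6.
have [p0 [p12 hlt]] := H5.
have n1 : (1 < n)%N by apply: leq_trans hn.
have [c1 c2] := @comb_bound R n k (p_thm4 R k n) n1 p0 p12.
rewrite ger0_norm; last by rewrite subr_ge0.
exact: (le_lt_trans c1 hlt).
Qed.

Local Close Scope ring_scope.

Theorem theorem4 (R : realType) (k : nat) : (1 <= k)%N ->
  ((fun n : nat => @Gnp_prob R n (p_thm4 R k n) (fun E => (kappa3 E <= k.-1)%N))
     @ \oo --> (1%R : R))%classic.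
Proof.
move=> k1; apply/cvgrPdist_lt => e e0.
have [N HN] := @main_bound R k k1 e e0.
near=> n; apply: HN; near: n; by exists N.
Unshelve. all: by end_near.
Qed.
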